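(* Let $\Gamma$ be a connected finite simple graph on $N\ge3$ vertices with minimum degree $d=2$ and $\varepsilon=\frac12$. Then there exist two adjacent vertices $u\sim v$ with $\deg u=\deg v=2$.
   Context: For a finite simple graph $\Gamma=(V,E)$ without isolated vertices, $\deg v$ is the number of neighbours of $v$ and $\mathcal N(v)=\{w\in V: w\sim v\}$. The normalized Laplacian acts on functions $f:V\to\mathbb R$ by $\Delta f(v)=f(v)-\frac{1}{\deg v}\sum_{w\sim v}f(w)$; its eigenvalues are $0=\lambda_1\le\lambda_2\le\dots\le\lambda_N$, and $\varepsilon:=\min_i|1-\lambda_i|$. $d$ denotes the minimum vertex degree. *)

(* Defs.v *)
From HB Require Import structures.
From mathcomp Require Import all_boot all_order all_algebra.
From mathcomp Require Import reals.
Set Implicit Arguments. Unset Strict Implicit. Unset Printing Implicit Defensive.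
Import Order.TTheory GRing.Theory Num.Theory.
Local Open Scope ring_scope.

Definition simple_graph (n : nat) (e : rel 'I_n) : Prop :=
  symmetric e /\ irreflexive e.

Definition deg (n : nat) (e : rel 'I_n) (v : 'I_n) : nat := #|[set w | e v w]|.

Definition connected_graph (n : nat) (e : rel 'I_n) : Prop :=
  forall u v : 'I_n, connect e u v.

Definition min_degree_eq (n : nat) (e : rel 'I_n) (k : nat) : Prop :=
  (forall v, k <= deg e v)%N /\ exists v, deg e v = k.

(* Matrix of the normalized Laplacian: (Delta f)(v) = f v - 1/deg v sum_{w~v} f w *)
Definition norm_laplacian (R : realType) (n : nat) (e : rel 'I_n) : 'M[R]_n :=
  \matrix_(i, j) ((i == j)%:R - (e i j)%:R / (deg e i)%:R).

Definition is_epsilon (R : realType) (n : nat) (e : rel 'I_n) (eps : R) : Prop :=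
  (forall l : R, eigenvalue (norm_laplacian R e) l -> eps <= `|1 - l|) /\
  (exists2 l : R, eigenvalue (norm_laplacian R e) l & `|1 - l| = eps).

(* Main.v *)
Require Import Defs.
From HB Require Import structures.
From mathcomp Require Import all_boot all_order all_algebra.
From mathcomp Require Import reals.
From mathcomp Require Import spectral sesquilinear.
From mathcomp.real_closed Require Import complex.
From mathcomp.algebra_tactics Require Import ring lra.
From mathcomp Require Import zify.
Set Implicit Arguments. Unset Strict Implicit. Unset Printing Implicit Defensive.
Import Order.TTheory GRing.Theory Num.Theory.
Local Open Scope ring_scope.
Local Open Scope sesquilinear_scope.


Lemma eig_transfer (R : rcfType) n (S : 'M[R]_n) (r : R) :
  eigenvalue (map_mx (real_complex R) S) ((real_complex R) r) -> eigenvalue S r.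
Proof.
rewrite !eigenvalue_root_char -map_char_poly fmorph_root //.
Qed.

Lemma real_C (R : rcfType) (x : R[i]) : x \is Num.real -> x = (real_complex R) (complex.Re x).
Proof.
case: x => a b /=.
rewrite realE !lecE /= => /orP[] /andP[/eqP Hb _]; [by rewrite Hb | by rewrite -Hb].
Qed.

Lemma conj_rc (R : rcfType) (x : R) : Num.conj_op ((real_complex R) x) = (real_complex R) x.
Proof. exact: conjc_real. Qed.

Lemma rc_real (R : rcfType) (x : R) : (real_complex R) x \is Num.real.
Proof. by rewrite realE !lecR -realE num_real. Qed.

Lemma map_rc_tC (R : rcfType) m k (M : 'M[R]_(m,k)) : (map_mx (real_complex R) M)^t* = map_mx (real_complex R) M^T.
Proof. apply/matrixP => i j; rewrite !mxE; exact: conjc_real. Qed.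

Lemma qform_sum (R : rcfType) n (x : 'rV[R[i]]_n) : (x *m x^t*) 0 0 = \sum_j x 0 j * (x 0 j)^*.
Proof. by rewrite !mxE; apply: eq_bigr => j _; rewrite !mxE. Qed.

Lemma qform_rc (R : rcfType) n (x : 'rV[R]_n) : (real_complex R) ((x *m x^T) 0 0) = (map_mx (real_complex R) x *m (map_mx (real_complex R) x)^t*) 0 0.
Proof. by rewrite map_rc_tC -map_mxM [in RHS]mxE. Qed.

Lemma psd_of_eig (R : rcfType) n (S : 'M[R]_n) : S^T = S ->
  (forall r, eigenvalue S r -> 1/4 <= r^+2) ->
  forall g : 'rV[R]_n, (g *m g^T) 0 0 / 4 <= (g *m S *m (g *m S)^T) 0 0.
Proof.
move=> Ssym Heig g.
set Sc := map_mx (real_complex R) S.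
have Sh : Sc \is hermsymmx.
  apply: realsym_hermsym.
    by apply/is_hermitianmxP; rewrite expr0 scale1r map_mx_id // map_trmx Ssym.
  by apply/mxOverP => i j; rewrite mxE rc_real.
set U := spectralmx Sc; set s := spectral_diag Sc.
have HU : U \is unitarymx by apply: spectral_unitarymx.
have HUu : U \in unitmx by apply: unitarymx_unit.
have HS : Sc = invmx U *m diag_mx s *m U.
  by apply/orthomx_spectralP; apply: hermitian_normalmx.
have sreal : s \is a realmx by apply: hermitian_spectral_diag_real.
have Hs : forall i, 1/4 <= s 0 i * (s 0 i)^*.
  move=> i.
  have sr : s 0 i = (real_complex R) (complex.Re (s 0 i)) by apply: real_C; apply: (mxOverP sreal).
  have : eigenvalue Sc (s 0 i).
    apply/eigenvalueP; exists (row i U).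
      rewrite HS !mulmxA -row_mul mulmxV // row1.
      have -> : (delta_mx 0 i : 'rV[R[i]]_n) *m diag_mx s = s 0 i *: delta_mx 0 i.
        apply/matrixP => k j; rewrite ord1 mul_mx_diag !mxE.
        by rewrite eqxx /=; case: eqP => [->|_]; rewrite ?mulr1 ?mulr0 ?mul1r ?mul0r.
      by rewrite -scalemxAl -rowE.
    apply/negP => /eqP H0.
    have := unitarymxP HU => /(congr1 (row i)).
    rewrite row_mul H0 mul0mx row1 => /matrixP /(_ 0 i).
    by rewrite !mxE !eqxx /= mulr1n => /eqP; rewrite eq_sym oner_eq0.
  move: (complex.Re (s 0 i)) sr => r ->  /eig_transfer /Heig H.
  have -> : (1/4 : R[i]) = (real_complex R) (1/4) by rewrite rmorphM rmorph1 fmorphV rmorph_nat.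
  by rewrite conj_rc -rmorphM lecR -expr2 //.
rewrite -lecR rmorphM /= qform_rc -[g *m S *m _]/((g *m S) *m (g *m S)^T) qform_rc.
rewrite map_mxM -/Sc.
set gc := map_mx (real_complex R) g.
set h := gc *m invmx U.
have Hg : gc = h *m U by rewrite /h mulmxKV.
have HgS : gc *m Sc = h *m diag_mx s *m U by rewrite HS /h !mulmxA.
have -> : (gc *m Sc *m (gc *m Sc)^t*) = (h *m diag_mx s) *m (h *m diag_mx s)^t*.
  rewrite HgS trmx_mul map_mxM mulmxA -[_ *m U *m _]mulmxA (unitarymxP HU) mulmx1.
  by rewrite trmx_mul map_mxM mulmxA.
have -> : (gc *m gc^t*) = h *m h^t*.
  by rewrite Hg trmx_mul map_mxM mulmxA -[_ *m U *m _]mulmxA (unitarymxP HU) mulmx1.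
rewrite !qform_sum mulr_suml.
apply: ler_sum => j _.
rewrite mul_mx_diag [(\matrix_(i, j0) _) 0 j]mxE.
have Hs' : (real_complex R) (4^-1) <= s 0 j * (s 0 j)^*.
  by move: (Hs j); rewrite mul1r fmorphV rmorph_nat.
rewrite rmorphM /= mulrACA.
by apply: ler_wpM2l => //; apply: mul_conjC_ge0.
Qed.


Lemma Q_nonneg (R : realType) n (e : rel 'I_n) : simple_graph e ->
  (forall v, (2 <= deg e v)%N) ->
  (forall l, eigenvalue (norm_laplacian R e) l -> 1/2 <= `|1 - l|) ->
  forall f : 'I_n -> R,
  (\sum_i (deg e i)%:R * f i ^+ 2) / 4 <=
  \sum_i (\sum_j (e i j)%:R * f j) ^+ 2 / (deg e i)%:R.
Proof.
move=> [esym eirr] Hdeg Hlap f.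
pose sq i := Num.sqrt ((deg e i)%:R : R).
have sq_gt0 : forall i, 0 < sq i.
  by move=> i; rewrite sqrtr_gt0 ltr0n; apply: leq_trans (Hdeg i).
have sq_neq0 : forall i, sq i != 0 by move=> i; rewrite gt_eqF.
have sq2 : forall i, sq i ^+ 2 = (deg e i)%:R by move=> i; rewrite sqr_sqrtr ?ler0n.
pose S := \matrix_(i, j) ((e i j)%:R / (sq i * sq j)) : 'M[R]_n.
have Ssym : S^T = S.
  by apply/matrixP => i j; rewrite !mxE [e j i]esym [sq j * _]mulrC.
have Heig : forall r, eigenvalue S r -> 1/4 <= r^+2.
  move=> r /eigenvalueP [w Hw w0].
  have : eigenvalue (norm_laplacian R e) (1 - r).
    apply/eigenvalueP; exists (\row_j (w 0 j * sq j)).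
      apply/rowP => j; rewrite !mxE.
      have := congr1 (fun M : 'rV[R]_n => M 0 j) Hw; rewrite !mxE => Hwj.
      rewrite (eq_bigr (fun i => w 0 i * sq i * (i == j)%:R - sq j * (w 0 i * S i j))); last first.
        move=> i _; rewrite !mxE -sq2.
        case: (e i j) => /=; rewrite ?mulr1n; field; by rewrite !sq_neq0.

      rewrite sumrB -mulr_sumr Hwj.
      rewrite (bigD1 j) //= eqxx mulr1 big1 ?addr0; last first.
        by move=> i /negbTE ->; rewrite mulr0.
      ring.
    apply: contra w0 => /eqP H; apply/eqP/rowP => j.
    have := congr1 (fun M : 'rV[R]_n => M 0 j) H; rewrite !mxE => /eqP.
    by rewrite mulf_eq0 (negbTE (sq_neq0 j)) orbF => /eqP.
  move/Hlap; rewrite opprB addrC subrK => Hr.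
  rewrite -real_normK ?num_real //.
  nra.
have := psd_of_eig Ssym Heig (\row_j (sq j * f j)).
have -> : ((\row_j (sq j * f j)) *m (\row_j (sq j * f j))^T) 0 0 = \sum_i (deg e i)%:R * f i ^+ 2.
  rewrite !mxE; apply: eq_bigr => i _; rewrite !mxE -sq2; ring.
have -> : ((\row_j (sq j * f j)) *m S *m ((\row_j (sq j * f j)) *m S)^T) 0 0 =
   \sum_i (\sum_j (e i j)%:R * f j) ^+ 2 / (deg e i)%:R => //.
rewrite !mxE; apply: eq_bigr => i _; rewrite !mxE.
have -> : \sum_j (\row_j0 (sq j0 * f j0)) 0 j * S j i = (\sum_j (e i j)%:R * f j) / sq i.
  rewrite mulr_suml; apply: eq_bigr => j _; rewrite !mxE [e j i]esym.
  by field; rewrite !sq_neq0.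
rewrite -sq2; field; by rewrite sq_neq0.
Qed.


Lemma sum_delta (R : realType) n (F : 'I_n -> R) x :
  \sum_j F j * (j == x)%:R = F x.
Proof.
rewrite (bigD1 x) //= eqxx mulr1 big1 ?addr0 // => j /negbTE ->; by rewrite mulr0.
Qed.

Lemma sum_ind (R : realType) n (P : pred 'I_n) :
  \sum_i ((P i)%:R : R) = #|[set i | P i]|%:R.
Proof.
rewrite -sum1_card natr_sum [RHS]big_mkcond /=; apply: eq_bigr => i _; rewrite inE; by case: (P i).
Qed.

Lemma deg_sum (R : realType) n (e : rel 'I_n) x :
  \sum_i ((e x i)%:R : R) = (deg e x)%:R.
Proof. by rewrite sum_ind. Qed.

Lemma sum_minus (R : realType) n (P : pred 'I_n) v :
  \sum_i ((P i && (i != v))%:R : R) = \sum_i (P i)%:R - (P v)%:R.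
Proof.
rewrite (bigD1 v) //= [X in _ = X - _](bigD1 v) //= eqxx andbF add0r addrAC subrr add0r.
by apply: eq_bigr => i ->; rewrite andbT.
Qed.

Lemma nat_cases (p q : nat) : (3 <= p)%N -> (3 <= q)%N -> (p * q < 2 * (p + q))%N ->
  (p + q <= 7)%N \/ (p = 3 /\ q = 5)%N \/ (p = 5 /\ q = 3)%N.
Proof. move=> *. nia. Qed.

Lemma arith1 (R : realType) (u w t X : R) : 0 < u -> u <= 1/3 -> u + w <= 1/2 -> 0 < t -> t <= 1/6 ->
   t * X = u -> (2 + t^+2 * X)/4 <= (1-t)^+2 * u + w + t^+2 * X / 2 -> False.
Proof.
move=> Hu Hu3 Huw Ht Ht6 HtX H.
have h1 : t^+2 * X = t * u by rewrite expr2 -mulrA HtX.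
rewrite h1 in H.
have htu : 0 < t * u by apply: mulr_gt0.
nra.
Qed.

Definition Qhyp (R : realType) n (e : rel 'I_n) := forall f : 'I_n -> R,
  (\sum_i (deg e i)%:R * f i ^+ 2) / 4 <= \sum_i (\sum_j (e i j)%:R * f j) ^+ 2 / (deg e i)%:R.

Lemma inner_sum (R : realType) n (F : 'I_n -> R) x y a b :
  \sum_j F j * (a * (j == x)%:R + b * (j == y)%:R) = a * F x + b * F y.
Proof.
rewrite (eq_bigr (fun j => (a * F j) * (j == x)%:R + (b * F j) * (j == y)%:R)).
  by rewrite big_split /= !(sum_delta (fun j => _ * F j)).
by move=> j _; ring.
Qed.

Lemma two_delta (R : realType) n (e : rel 'I_n) (HQ : Qhyp R e) x y (a b : R) : x != y ->
  (a^+2 * (deg e x)%:R + b^+2 * (deg e y)%:R)/4 <=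
  \sum_i (a * (e i x)%:R + b * (e i y)%:R)^+2 / (deg e i)%:R.
Proof.
move=> Hxy.
have := HQ (fun j => a * (j == x)%:R + b * (j == y)%:R).
rewrite [X in _ <= X](eq_bigr (fun i => (a * (e i x)%:R + b * (e i y)%:R)^+2 / (deg e i)%:R)); last first.
  by move=> i _ /=; rewrite inner_sum.
have -> : \sum_i (deg e i)%:R * (a * (i == x)%:R + b * (i == y)%:R) ^+ 2 =
   a^+2 * (deg e x)%:R + b^+2 * (deg e y)%:R => //.
rewrite (eq_bigr (fun i => (a^+2 * (deg e i)%:R) * (i == x)%:R + (b^+2 * (deg e i)%:R) * (i == y)%:R)).
  by rewrite big_split /= (sum_delta (fun i => a^+2 * _)) (sum_delta (fun i => b^+2 * _)).
move=> i _; have [->|hx] := eqVneq i x.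
  by rewrite (negbTE Hxy) /= ?mulr1n ?mulr0n; ring.
have [->|hy] := eqVneq i y.
  by rewrite /= ?mulr1n ?mulr0n; ring.
by rewrite /= ?mulr1n ?mulr0n; ring.
Qed.

Lemma inv_le (R : realType) (d k : nat) : (k <= d)%N -> (0 < k)%N ->
  ((d%:R : R)^-1 <= (k%:R)^-1).
Proof.
move=> hkd hk; rewrite lef_pV2 ?ler_nat // posrE ltr0n //; exact: leq_trans hkd.
Qed.

Lemma inv_pos (R : realType) (d : nat) : (0 < d)%N -> (0 : R) < (d%:R)^-1.
Proof. by move=> hd; rewrite invr_gt0 ltr0n. Qed.

Lemma comb (R : realType) n (e : rel 'I_n) : simple_graph e ->
  (forall v, (2 <= deg e v)%N) -> (exists v, deg e v = 2%N) ->
  (forall u w, e u w -> deg e u = 2%N -> deg e w = 2%N -> False) ->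
  Qhyp R e -> False.
Proof.
move=> [esym eirr] Hmin [v Hv] Hno HQ.
have nb3 : forall u i, deg e u = 2%N -> e u i -> (3 <= deg e i)%N.
  move=> u i Hu Hui; have := Hmin i; rewrite leq_eqVlt => /orP [/eqP H2|//].
  by exfalso; apply: (Hno u i Hui Hu); rewrite -H2.
have [a [b [Hab Nv]]] : exists a b, a != b /\ forall i, e v i = (i == a) || (i == b).
  have : #|[set w | e v w]| == 2%N by rewrite -[#|_|]/(deg e v) Hv.
  case/cards2P => a [b [Hab Hset]]; exists a, b; split => // i.
  by rewrite -in_set2 -Hset inE.
have eva : e v a by rewrite Nv eqxx.
have evb : e v b by rewrite Nv eqxx orbT.
have hva : v != a by apply/negP => /eqP Hq; move: eva; rewrite -Hq eirr.
have hvb : v != b by apply/negP => /eqP Hq; move: evb; rewrite -Hq eirr.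
have Ha3 := nb3 v a Hv eva.
have Hb3 := nb3 v b Hv evb.
have dpos : forall i, (0 < deg e i)%N by move=> i; apply: leq_trans (Hmin i).
case: (boolP [exists w, [&& deg e w == 2%N, w != v & e w a || e w b]]).
  move=> /existsP [w /and3P [/eqP Hw Hwv Hwx]].
  have [x [ewx evx]] : exists x, e w x /\ e v x.
    by case/orP: Hwx => H; [exists a | exists b].
  have Hvw : v != w by rewrite eq_sym.
  have := two_delta HQ 1 (-1) Hvw; rewrite Hv Hw.
  have Hb : \sum_i (1 * (e i v)%:R + -1 * (e i w)%:R) ^+ 2 / (deg e i)%:R <=
     \sum_i ((3:R)^-1 * (e v i && (i != x))%:R + 3^-1 * (e w i && (i != x))%:R).
    apply: ler_sum => i _; rewrite [e i v]esym [e i w]esym.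
    have hk := inv_pos R (dpos i).
    have [->|hix] := eqVneq i x.
      rewrite evx ewx /= ?eqxx /= ?andbF /= ?mulr1n ?mulr0n. nra.
    rewrite /= !andbT.
    case E1: (e v i); case E2: (e w i); rewrite /= ?mulr1n ?mulr0n.
    - have := inv_le R (nb3 v i Hv E1) isT; nra.
    - have := inv_le R (nb3 v i Hv E1) isT; nra.
    - have := inv_le R (nb3 w i Hw E2) isT; nra.
    - nra.
  rewrite big_split /= -!mulr_sumr !sum_minus !deg_sum Hv Hw evx ewx /= in Hb.
  move=> H; move: (le_trans H Hb); rewrite mulr1n; lra.
move=> /existsPn HB.
have nbA3 : forall i, e a i -> i != v -> (3 <= deg e i)%N.
  move=> i Hai Hiv; have := Hmin i; rewrite leq_eqVlt => /orP [/eqP H2|//].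
  by exfalso; have := HB i; rewrite -H2 eqxx Hiv /= [e i a]esym Hai.
have nbB3 : forall i, e b i -> i != v -> (3 <= deg e i)%N.
  move=> i Hbi Hiv; have := Hmin i; rewrite leq_eqVlt => /orP [/eqP H2|//].
  by exfalso; have := HB i; rewrite -H2 eqxx Hiv /= [e i b]esym Hbi orbT.
have eav : e a v by rewrite esym.
have ebv : e b v by rewrite esym.
set p := deg e a; set q := deg e b.
have hp := inv_pos R (dpos a); have hq := inv_pos R (dpos b).
have hp3 := inv_le R Ha3 isT; have hq3 := inv_le R Hb3 isT.
have p0 : (p%:R : R) != 0 by rewrite pnatr_eq0 -lt0n dpos.
have q0 : (q%:R : R) != 0 by rewrite pnatr_eq0 -lt0n dpos.
have Hp3R : (3 : R) <= p%:R by rewrite (ler_nat _ 3).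
case: (lerP ((p%:R : R)^-1 + (q%:R)^-1) (1/2)) => Hpq.
  case: (pickP (fun x => e a x && (x != v))) => [x /andP [eax hxv] | Hnone]; last first.
    have := sum_minus R (e a) v; rewrite deg_sum eav big1 => [|i _]; last by rewrite Hnone.
    move=> H0; rewrite -/p /= mulr1n in H0; suff : (0 : R) < 0 by rewrite ltxx. lra.
  have Hvx : v != x by rewrite eq_sym.
  have hx0 := dpos x.
  set t := ((p%:R : R) * (deg e x)%:R)^-1.
  have Ht0 : 0 < t by rewrite /t invr_gt0 mulr_gt0 // ltr0n ?dpos.
  have H := two_delta HQ 1 (-t) Hvx; rewrite Hv in H.
  have Hb : \sum_i (1 * (e i v)%:R + - t * (e i x)%:R) ^+ 2 / (deg e i)%:R <=
     \sum_i (((1-t)^+2/p%:R) * (i == a)%:R + ((q%:R)^-1 * (i == b)%:R + (t^+2/2) * (e x i)%:R)).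
    apply: ler_sum => i _; rewrite [e i v]esym [e i x]esym.
    have hk := inv_pos R (dpos i).
    have [->|hia] := eqVneq i a.
      rewrite eva [e x a]esym eax (negbTE Hab) /= ?mulr1n ?mulr0n; nra.
    rewrite (Nv i) (negbTE hia) /=.
    have [->|hib] := eqVneq i b.
      case E: (e x b); rewrite /= ?mulr1n ?mulr0n; nra.
    have := inv_le R (Hmin i) isT => hk2.
    case E: (e x i); rewrite /= ?mulr1n ?mulr0n; nra.
  rewrite big_split big_split /= (sum_delta (fun _ => _)) (sum_delta (fun _ => _)) -!mulr_sumr deg_sum in Hb.
  have H' := le_trans H Hb.
  have Ht6 : t <= 1/6.
    have h6 : (6 <= p * deg e x)%N by apply: (leq_mul Ha3 (Hmin x)).
    rewrite /t -natrM div1r; by move: (inv_le R h6 isT).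
  apply: (@arith1 R (p%:R^-1) (q%:R^-1) t (deg e x)%:R) => //.
  - lra.
  - rewrite /t; field; rewrite p0; rewrite pnatr_eq0 -lt0n hx0. done.
  - nra.
have Hnat : (p * q < 2 * (p + q))%N.
  have : (0 : R) < (p%:R^-1 + q%:R^-1 - 1/2) * (2 * p%:R * q%:R).
    apply: mulr_gt0; first by rewrite subr_gt0.
    by rewrite !mulr_gt0 // ltr0n dpos.
  have -> : (p%:R^-1 + q%:R^-1 - 1/2) * (2 * p%:R * q%:R) =
     ((2 * (p + q))%:R - (p * q)%:R : R).
    by rewrite natrM natrD natrM; field; rewrite p0 q0.
  by rewrite subr_gt0 ltr_nat.
have key : forall al be : R, al * be <= 0 ->
   (al^+2 * p%:R + be^+2 * q%:R)/4 <= (al+be)^+2/2 + al^+2/3 * (p%:R - 1) + be^+2/3 * (q%:R - 1).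
  move=> al be Hab0.
  have H := two_delta HQ al be Hab; apply: (le_trans H).
  have Hb : \sum_i (al * (e i a)%:R + be * (e i b)%:R) ^+ 2 / (deg e i)%:R <=
     \sum_i ((al+be)^+2/2 * (i == v)%:R + (al^+2/3 * (e a i && (i != v))%:R + be^+2/3 * (e b i && (i != v))%:R)).
    apply: ler_sum => i _; rewrite [e i a]esym [e i b]esym.
    have hk := inv_pos R (dpos i).
    have [->|hiv] := eqVneq i v.
      rewrite eav ebv Hv /= ?eqxx /= ?andbF /= ?mulr1n ?mulr0n. nra.
    rewrite /= !andbT.
    case E1: (e a i); case E2: (e b i); rewrite /= ?mulr1n ?mulr0n.
    - have := inv_le R (nbA3 i E1 hiv) isT; nra.
    - have := inv_le R (nbA3 i E1 hiv) isT; nra.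
    - have := inv_le R (nbB3 i E2 hiv) isT; nra.
    - nra.
  apply: (le_trans Hb).
  rewrite big_split big_split /= (sum_delta (fun _ => _)) -!mulr_sumr !sum_minus !deg_sum eav ebv /=.
  by rewrite addrA.
case: (nat_cases Ha3 Hb3 Hnat) => [Hs|[[Ep Eq]|[Ep Eq]]].
- have := key 1 (-1).
  have : (p%:R + q%:R : R) <= 7 by rewrite -natrD (ler_nat _ _ 7).
  move=> H7 /(_ ltac:(lra)); lra.
- have := key 7 (-6); rewrite /p /q Ep Eq; move=> /(_ ltac:(lra)); lra.
- have := key 6 (-7); rewrite /p /q Ep Eq; move=> /(_ ltac:(lra)); lra.
Qed.

Theorem mainTheorem9 (R : realType) (n : nat) (e : rel 'I_n) :
  simple_graph e -> connected_graph e -> (3 <= n)%N ->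
  min_degree_eq e 2 ->
  is_epsilon e (1 / 2 : R) ->
  exists u v : 'I_n, [/\ e u v, deg e u = 2%N & deg e v = 2%N].
Proof.
move=> Hs Hc Hn [Hmin Hex] [Heps _].
case: (boolP [exists u, exists v, [&& e u v, deg e u == 2%N & deg e v == 2%N]]).
  by move=> /existsP [u /existsP [v /and3P [Huv /eqP Hu /eqP Hv]]]; exists u, v.
move=> /existsPn Hno; exfalso.
apply: (@comb R n e Hs Hmin Hex _ (Q_nonneg Hs Hmin Heps)).
move=> u w Huw Hu Hw; move: (Hno u) => /existsPn /(_ w).
by rewrite Huw Hu Hw eqxx.
Qed.
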